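(* Let $R$ be a partially ordered commutative ring with $\mathbb{N}\subseteq\mathrm{Loc}(R)$, let $\varphi\in\mathcal{K}(R)$ and let $U$ be a neighbourhood of $\varphi$ in $\mathcal{K}(R)$. Then there exists $b\in R^{\mathrm{bd}}_{\mathrm{loc}}$ such that $\varphi\in\mathrm{O}_{b,]-\infty,0[}\subseteq U$, where $\mathrm{O}_{b,]-\infty,0[}=\{\psi\in\mathcal{K}(R):\psi(b)<0\}$.
   Context: Rings are commutative with unit; ring morphisms are unital. A partially ordered commutative ring is a commutative ring $R$ with partial order $\le$, $r\le s\Rightarrow r+t\le s+t$, positive cone $R^+$ closed under multiplication and containing all squares. $\mathbb{N}=\{1,2,\dots\}$, $\mathbb{N}_0=\mathbb{N}\cup\{0\}$. $\mathrm{Loc}(R)$ is the set of $s\in1+R^+$ such that $rs\in R^+$ implies $r\in R^+$ for all $r\in R$; $\mathbb{N}\subseteq\mathrm{Loc}(R)$ means $n\cdot1\in\mathrm{Loc}(R)$ for all $n$. $R_{\mathrm{loc}}$: fractions $r/s$ ($r\in R$, $s\in\mathrm{Loc}(R)$), $r/s=r'/s'$ iff $rs'=r's$, usual operations, ordered by $p/q\le r/s$ iff $ps\le rq$. $R^{\mathrm{bd}}_{\mathrm{loc}}=\{a\in R_{\mathrm{loc}}:\exists n\in\mathbb{N}_0,\ -n\le a\le n\}$, a subring. $\mathcal{K}(R)$ is the set of ring morphisms $\varphi\colon R^{\mathrm{bd}}_{\mathrm{loc}}\to\mathbb{R}$ with $\varphi(a)\ge0$ for all $a\ge 0$, with the topology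 generated by the subbasis of sets $\{\varphi:\varphi(a)\in V\}$, $a\in R^{\mathrm{bd}}_{\mathrm{loc}}$, $V\subseteq\mathbb{R}$ open. *)

(* Defs.v *)
From HB Require Import structures.
From mathcomp Require Import all_boot all_order all_algebra.
From mathcomp Require Import all_classical all_reals.
From mathcomp Require Import topology normedtype.
Set Implicit Arguments. Unset Strict Implicit. Unset Printing Implicit Defensive.
Import Order.TTheory GRing.Theory Num.Theory.
Import numFieldNormedType.Exports.
Local Open Scope ring_scope.

Section PORing.
Variable R : comPzRingType.

Definition pocring (le : R -> R -> Prop) : Prop :=
  (forall r, le r r) /\
  (forall r s, le r s -> le s r -> r = s) /\
  (forall r s t, le r s -> le s t -> le r t) /\
  (forall r s t, le r s -> le (r + t) (s + t)) /\
  (forall r s, le 0 r -> le 0 s -> le 0 (r * s)) /\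
  (forall r, le 0 (r * r)).

Variable le : R -> R -> Prop.

Definition Loc (s : R) : Prop :=
  le 0 (s - 1) /\ (forall r, le 0 (r * s) -> le 0 r).

Record frac := Frac { fnum : R; fden : R; fdenP : Loc fden }.

Definition frac_eq (a b : frac) : Prop := fnum a * fden b = fnum b * fden a.

(* bounded: exists n in N_0, -n <= a <= n, i.e. (-n)/1 <= r/s <= n/1,
   i.e. (-n) s <= r 1 and r 1 <= n s *)
Definition frac_bounded (a : frac) : Prop :=
  exists n : nat, le ((- n%:R) * fden a) (fnum a * 1) /\
                  le (fnum a * 1) (n%:R * fden a).

(* R^bd_loc, represented by bounded representatives *)
Definition bdfrac := {a : frac | frac_bounded a}.

(* Ring morphisms R^bd_loc -> Rr that are positive, written out on
   representatives: well defined on equivalence classes, unital, additive,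
   multiplicative, and nonnegative on a >= 0 (0/1 <= r/s iff 0 s <= r 1). *)
Definition is_Kchar (Rr : realType) (phi : bdfrac -> Rr) : Prop :=
  [/\ (forall a b : bdfrac, frac_eq (proj1_sig a) (proj1_sig b) -> phi a = phi b),
      (forall c : bdfrac, fnum (proj1_sig c) * 1 = 1 * fden (proj1_sig c) -> phi c = 1),
      (* c = a + b = (r s' + r' s)/(s s') *)
      (forall a b c : bdfrac,
          fnum (proj1_sig c) * (fden (proj1_sig a) * fden (proj1_sig b)) =
          (fnum (proj1_sig a) * fden (proj1_sig b) + fnum (proj1_sig b) * fden (proj1_sig a)) * fden (proj1_sig c) ->
          phi c = phi a + phi b),
      (* c = a * b = (r r')/(s s') *)
      (forall a b c : bdfrac,
          fnum (proj1_sig c) * (fden (proj1_sig a) * fden (proj1_sig b)) =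
          (fnum (proj1_sig a) * fnum (proj1_sig b)) * fden (proj1_sig c) ->
          phi c = phi a * phi b) &
      (forall a : bdfrac, le (0 * fden (proj1_sig a)) (fnum (proj1_sig a) * 1) -> 0 <= phi a)].

Definition Kspace (Rr : realType) := {phi : bdfrac -> Rr | is_Kchar phi}.

End PORing.

Inductive gen_open (T : Type) (S : set (set T)) : set T -> Prop :=
  | gen_open_sub A : S A -> gen_open S A
  | gen_open_T : gen_open S setT
  | gen_open_I A B : gen_open S A -> gen_open S B -> gen_open S (A `&` B)
  | gen_open_U (F : set (set T)) :
      (forall A, F A -> gen_open S A) -> gen_open S (\bigcup_(A in F) A).

Definition K_subbasis (R : comPzRingType) (le : R -> R -> Prop) (Rr : realType)
  : set (set (Kspace le Rr)) :=
  fun A => exists (a : bdfrac le) (V : set Rr),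
      open V /\ A = (fun psi : Kspace le Rr => V (proj1_sig psi a)).

Definition K_open (R : comPzRingType) (le : R -> R -> Prop) (Rr : realType)
  (W : set (Kspace le Rr)) : Prop := gen_open (@K_subbasis R le Rr) W.

Definition K_nbhd (R : comPzRingType) (le : R -> R -> Prop) (Rr : realType)
  (phi : Kspace le Rr) (U : set (Kspace le Rr)) : Prop :=
  exists W, K_open W /\ W phi /\ (forall psi, W psi -> U psi).

(* Main.v *)
Require Import Defs.
From HB Require Import structures.
From mathcomp Require Import all_boot all_order all_algebra.
From mathcomp Require Import all_classical all_reals.
From mathcomp Require Import topology normedtype.
From mathcomp Require Import ring lra.
Import Order.TTheory GRing.Theory Num.Theory.
Import numFieldNormedType.Exports.
Local Open Scope ring_scope.

Section Aux.
Variable R : comPzRingType.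
Variable le : R -> R -> Prop.
Hypothesis HR : pocring le.
Hypothesis HN : forall n : nat, Loc le (n.+1)%:R.

Lemma le_refl' r : le r r. Proof. by case: HR. Qed.
Lemma le_trans' {r s t} : le r s -> le s t -> le r t.
Proof. by case: HR => _ [_ [H _]]; apply H. Qed.
Lemma le_addr' r s t : le r s -> le (r + t) (s + t).
Proof. by case: HR => _ [_ [_ [H _]]]; apply H. Qed.
Lemma le_mul0 {r s} : le 0 r -> le 0 s -> le 0 (r * s).
Proof. by case: HR => _ [_ [_ [_ [H _]]]]; apply H. Qed.
Lemma le_sq r : le 0 (r * r).
Proof. by case: HR => _ [_ [_ [_ [_ H]]]]; apply H. Qed.
Lemma le_subP r s : le r s <-> le 0 (s - r).
Proof.
split => H; first by have := le_addr' _ _ (- r) H; rewrite subrr.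
by have := le_addr' _ _ (r) H; rewrite add0r subrK.
Qed.
Lemma le_add0 {r s} : le 0 r -> le 0 s -> le 0 (r + s).
Proof.
move=> Hr Hs; apply: le_trans' Hs _.
by have := le_addr' _ _ (s) Hr; rewrite add0r.
Qed.
Lemma le0n n : le 0 n%:R.
Proof.
elim: n => [|n IH]; first exact: le_refl'.
rewrite mulrS; apply: le_add0 IH.
by have := le_sq 1; rewrite mulr1.
Qed.
Lemma Loc_ge0 {s} : Loc le s -> le 0 s.
Proof.
case=> H _; have -> : s = (s - 1) + 1 by rewrite subrK.
by apply: le_add0 H _; have := le_sq 1; rewrite mulr1.
Qed.
Lemma Loc1 : Loc le 1.
Proof. by have := HN 0; rewrite mulr1n. Qed.
Lemma LocM {s t} : Loc le s -> Loc le t -> Loc le (s * t).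
Proof.
case=> Hs1 Hs2 [Ht1 Ht2]; split.
  have -> : s * t - 1 = (s - 1) * (t - 1) + ((s - 1) + (t - 1)) by ring.
  by apply: le_add0; [apply: le_mul0|apply: le_add0].
by move=> r; rewrite mulrA => /Ht2 /Hs2.
Qed.
Lemma half x : le 0 (x * 2%:R) -> le 0 x.
Proof. by case: (HN 1) => _; apply. Qed.

Definition fadd (x y : Defs.frac le) : Defs.frac le :=
  @Defs.Frac _ le (fnum x * fden y + fnum y * fden x) (fden x * fden y)
    (LocM (fdenP x) (fdenP y)).
Definition fmul (x y : Defs.frac le) : Defs.frac le :=
  @Defs.Frac _ le (fnum x * fnum y) (fden x * fden y) (LocM (fdenP x) (fdenP y)).
Definition fopp (x : Defs.frac le) : Defs.frac le := @Defs.Frac _ le (- fnum x) (fden x) (fdenP x).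
Definition fnat (n : nat) : Defs.frac le := @Defs.Frac _ le n%:R 1 Loc1.

Lemma bndP (x : Defs.frac le) : (exists n : nat, le 0 (n%:R * fden x + fnum x) /\
   le 0 (n%:R * fden x - fnum x)) -> frac_bounded x.
Proof.
case=> n [H1 H2]; exists n; split; apply/le_subP.
  by rewrite mulr1 mulNr opprK addrC.
by rewrite mulr1.
Qed.

Lemma bndE (x : Defs.frac le) : frac_bounded x -> exists n : nat, le 0 (n%:R * fden x + fnum x) /\
   le 0 (n%:R * fden x - fnum x).
Proof.
case=> n [/le_subP H1 /le_subP H2]; exists n; split.
  by move: H1; rewrite mulr1 mulNr opprK addrC.
by move: H2; rewrite mulr1.
Qed.

Lemma bnd_add {x y} : frac_bounded x -> frac_bounded y -> frac_bounded (fadd x y).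
Proof.
move=> /bndE [n [Hx1 Hx2]] /bndE [m [Hy1 Hy2]]; apply: bndP; exists (n + m)%N => /=.
have Gx := Loc_ge0 (fdenP x); have Gy := Loc_ge0 (fdenP y).
split.
  have -> : (n + m)%:R * (fden x * fden y) + (fnum x * fden y + fnum y * fden x)
    = (n%:R * fden x + fnum x) * fden y + (m%:R * fden y + fnum y) * fden x by ring.
  by apply: le_add0; apply: le_mul0.
have -> : (n + m)%:R * (fden x * fden y) - (fnum x * fden y + fnum y * fden x)
  = (n%:R * fden x - fnum x) * fden y + (m%:R * fden y - fnum y) * fden x by ring.
by apply: le_add0; apply: le_mul0.
Qed.

Lemma bnd_mul {x y} : frac_bounded x -> frac_bounded y -> frac_bounded (fmul x y).
Proof.
move=> /bndE [n [Hx1 Hx2]] /bndE [m [Hy1 Hy2]]; apply: bndP; exists (n * m)%N => /=.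
split; apply: half.
  have -> : ((n * m)%:R * (fden x * fden y) + fnum x * fnum y) * 2%:R
    = (n%:R * fden x + fnum x) * (m%:R * fden y + fnum y)
      + (n%:R * fden x - fnum x) * (m%:R * fden y - fnum y) by ring.
  by apply: le_add0; apply: le_mul0.
have -> : ((n * m)%:R * (fden x * fden y) - fnum x * fnum y) * 2%:R
  = (n%:R * fden x + fnum x) * (m%:R * fden y - fnum y)
    + (n%:R * fden x - fnum x) * (m%:R * fden y + fnum y) by ring.
by apply: le_add0; apply: le_mul0.
Qed.

Lemma bnd_opp {x} : frac_bounded x -> frac_bounded (fopp x).
Proof.
move=> /bndE [n [H1 H2]]; apply: bndP; exists n => /=; split.
  exact: H2.
by rewrite opprK.
Qed.

Lemma bnd_nat n : frac_bounded (fnat n).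
Proof.
apply: bndP; exists n => /=; rewrite mulr1 subrr; split; last exact: le_refl'.
exact: (le_add0 (le0n n) (le0n n)).
Qed.

Definition badd (x y : bdfrac le) : bdfrac le :=
  exist _ (fadd (sval x) (sval y)) (bnd_add (svalP x) (svalP y)).
Definition bmul (x y : bdfrac le) : bdfrac le :=
  exist _ (fmul (sval x) (sval y)) (bnd_mul (svalP x) (svalP y)).
Definition bopp (x : bdfrac le) : bdfrac le :=
  exist _ (fopp (sval x)) (bnd_opp (svalP x)).
Definition bnat (n : nat) : bdfrac le := exist _ (fnat n) (bnd_nat n).
Definition bint (z : int) : bdfrac le :=
  match z with Posz n => bnat n | Negz n => bopp (bnat n.+1) end.

Variable Rr : realType.
Variable f : bdfrac le -> Rr.
Hypothesis Hf : is_Kchar f.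

Lemma f_add x y : f (badd x y) = f x + f y.
Proof. case: Hf => _ _ Ha _ _; apply: Ha => /=; ring. Qed.
Lemma f_mul x y : f (bmul x y) = f x * f y.
Proof. case: Hf => _ _ _ Hm _; apply: Hm => /=; ring. Qed.
Lemma f_nat0 : f (bnat 0) = 0.
Proof.
case: Hf => _ _ Ha _ _.
have : f (bnat 0) = f (bnat 0) + f (bnat 0) by apply: Ha => /=; ring.
lra.
Qed.
Lemma f_nat n : f (bnat n) = n%:R.
Proof.
elim: n => [|n IH]; first exact: f_nat0.
case: Hf => _ H1 Ha _ _.
have -> : f (bnat n.+1) = f (bnat n) + f (bnat 1).
  by apply: Ha => /=; rewrite -addn1 natrD; ring.
rewrite IH H1 /=; last by ring.
by rewrite -addn1 natrD.
Qed.
Lemma f_opp x : f (bopp x) = - f x.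
Proof.
case: Hf => _ _ Ha _ _.
have : f (bnat 0) = f x + f (bopp x) by apply: Ha => /=; ring.
rewrite f_nat0; lra.
Qed.
Lemma f_int z : f (bint z) = z%:~R.
Proof.
case: z => n /=; first by rewrite f_nat.
by rewrite f_opp f_nat NegzE mulrNz.
Qed.

End Aux.

Arguments badd {R le}. Arguments bmul {R le}. Arguments bopp {R le}.
Arguments bnat {R le}. Arguments bint {R le}.


Arguments f_nat {R le} HR HN {Rr f}.
Arguments f_add {R le} HR {Rr f}.
Arguments f_mul {R le} HR HN {Rr f}. Arguments f_int {R le} HR HN {Rr f}. Arguments f_opp {R le} HR HN {Rr f}.
Lemma sum_le_size (Rr : realType) (T : Type) (s : seq T) (h : T -> Rr) :
  (forall a, List.In a s -> h a <= 1) -> \sum_(a <- s) h a <= (size s)%:R.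
Proof.
elim: s => [|x s IH] H; first by rewrite big_nil.
rewrite big_cons /= -addn1 natrD addrC lerD //.
  by apply: IH => a Ha; apply: H; right.
by apply: H; left.
Qed.

Lemma term_le_sum (Rr : realType) (T : Type) (s : seq T) (h : T -> Rr) a :
  (forall x, 0 <= h x) -> List.In a s -> h a <= \sum_(x <- s) h x.
Proof.
move=> H0; elim: s => [|x s IH] //= [->|Ha]; rewrite big_cons.
  by rewrite lerDl sumr_ge0.
by rewrite (le_trans (IH Ha)) // lerDr.
Qed.

Lemma f_fold (R : comPzRingType) (le : R -> R -> Prop) (HR : pocring le)
  (HN : forall n : nat, Loc le (n.+1)%:R) (Rr : realType) (f : bdfrac le -> Rr)
  (Hf : is_Kchar f) (t : bdfrac le -> bdfrac le) c s :
  f (foldr (fun a acc => badd HR (t a) acc) c s) = \sum_(a <- s) f (t a) + f c.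
Proof.
elim: s => [|x s IH] /=; first by rewrite big_nil add0r.
by rewrite (f_add HR Hf) IH big_cons addrA.
Qed.

Lemma box (R : comPzRingType) (le : R -> R -> Prop) (Rr : realType)
  (phi : Kspace le Rr) (W : set (Kspace le Rr)) :
  K_open W -> W phi -> exists (s : seq (bdfrac le)) (e : Rr), 0 < e /\
   forall psi : Kspace le Rr,
    (forall a, List.In a s -> `|proj1_sig psi a - proj1_sig phi a| < e) -> W psi.
Proof.
rewrite /K_open; elim => {W}.
- move=> A [a [V [HV ->]]] /= Hphi.
  have := HV _ Hphi => /nbhs_ballP [e e0 He].
  exists [:: a], e; split => // psi Hpsi; apply: He.
  rewrite -ball_normE /ball_ /= distrC; by apply: Hpsi; left.
- move=> _; exists [::], 1; split => // psi _; done.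
- move=> A B _ IHA _ IHB [/IHA [s1 [e1 [e10 H1]]] /IHB [s2 [e2 [e20 H2]]]].
  exists (s1 ++ s2), (Num.min e1 e2); split; first by rewrite lt_min e10.
  move=> psi Hpsi; split.
    by apply: H1 => a Ha; have := Hpsi a (List.in_or_app _ _ _ (or_introl Ha)); rewrite lt_min => /andP [].
  by apply: H2 => a Ha; have := Hpsi a (List.in_or_app _ _ _ (or_intror Ha)); rewrite lt_min => /andP [].
- move=> F _ IHF [A FA Aphi].
  have [s [e [e0 H]]] := IHF A FA Aphi.
  by exists s, e; split => // psi /H HA; exists A.
Qed.

Theorem proposition21 (R : comPzRingType) (le : R -> R -> Prop)
  (HR : pocring le) (HN : forall n : nat, Loc le (n.+1)%:R)
  (Rr : realType) (phi : Kspace le Rr) (U : set (Kspace le Rr))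
  (HU : K_nbhd phi U) :
  exists b : bdfrac le,
    proj1_sig phi b < 0 /\ (forall psi : Kspace le Rr, proj1_sig psi b < 0 -> U psi).
Proof.
case: HU => W [HW [Wphi WU]].
have [s [e [e0 Hbox]]] := box _ _ _ _ _ HW Wphi.
set N := size s.
pose k := (Num.Def.archi_bound ((N.+2)%:R / e)).+1.
pose kk : Rr := k%:R.
have kk0 : 0 < kk by rewrite ltr0n.
have kke : (N.+2)%:R < kk * e.
  rewrite -ltr_pdivrMr //; apply: lt_trans (archi_boundP _) _.
    by rewrite divr_ge0 // ltW.
  by rewrite /kk ltr_nat.
pose f0 := proj1_sig phi.
pose m a : int := Num.floor (kk * f0 a).
pose t a := badd HR (bmul HR HN (bnat HR HN k) a) (bint HR HN (- m a)).
pose tm a := bmul HR HN (t a) (t a).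
pose b := foldr (fun a acc => badd HR (tm a) acc) (bopp HR (bnat HR HN N.+1)) s.
exists b.
have val : forall psi : Kspace le Rr, proj1_sig psi b =
    \sum_(a <- s) (kk * proj1_sig psi a - (m a)%:~R) ^+ 2 - N.+1%:R.
  move=> [g Hg] /=.
  rewrite (f_fold _ _ HR HN _ _ Hg) (f_opp HR HN Hg) (f_nat HR HN Hg).
  congr (_ - _); apply: eq_bigr => a _.
  rewrite (f_mul HR HN Hg) (f_add HR Hg) (f_mul HR HN Hg) (f_nat HR HN Hg).
  by rewrite (f_int HR HN Hg) mulrNz expr2.
have d0P : forall a, 0 <= kk * f0 a - (m a)%:~R < 1.
  move=> a; have /andP [h1 h2] := floor_itv (kk * f0 a).
  rewrite /m subr_ge0 h1 /=; move: h2; rewrite intrD /=; lra.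
split.
  rewrite val.
  have : \sum_(a <- s) (kk * f0 a - (m a)%:~R) ^+ 2 <= N%:R.
    apply: sum_le_size => a _; have /andP [h1 h2] := d0P a.
    rewrite expr2; nra.
  have eN : (N.+1)%:R = N%:R + 1 :> Rr by rewrite -addn1 natrD.
  rewrite eN; lra.
move=> psi Hlt; apply: WU; apply: Hbox => a Ha.
set g := proj1_sig psi.
have h := term_le_sum _ _ _ (fun x => (kk * g x - (m x)%:~R) ^+ 2) a (fun x => sqr_ge0 _) Ha.
move: Hlt; rewrite val -/g => Hlt.
have hd : (kk * g a - (m a)%:~R) ^+ 2 < N.+1%:R by lra.
have hN : 1 <= N.+1%:R :> Rr by rewrite ler1n.
have hd2 : `|kk * g a - (m a)%:~R| < N.+1%:R.
  rewrite ltr_norml; move: hd; rewrite expr2 => hd; apply/andP; split; nra.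
have /andP [h1 h2] := d0P a.
have : `|kk * (g a - f0 a)| < N.+2%:R.
  move: hd2; rewrite !ltr_norml => /andP [hl hr].
  have eN : (N.+2)%:R = (N.+1)%:R + 1 :> Rr by rewrite -addn1 natrD.
  rewrite eN mulrBr; apply/andP; split; lra.
rewrite normrM (gtr0_norm kk0) => hk.
by rewrite -(ltr_pM2l kk0); apply: lt_trans hk kke.
Qed.
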